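(* Let $\mathbf{k}$ be a field of characteristic $0$ and $M\ge0$. For $f\in\mathcal{P}^\Sigma_{d,n}$, $b\in\mathcal{P}^\Sigma_{d,m}$, $a\in\mathcal{P}^\Sigma_{e,n+m}$ and $g\in\mathrm{Inc}(\mathbf N)$, \[(f\cdot b)\ast_g a=(f\otimes b)\ast_g\Delta(a),\] i.e. writing $\Delta(a)=\sum a^{(1)}\otimes a^{(2)}$, one has $(f\cdot b)\ast_g a=\sum (f\ast_g a^{(1)})\cdot(b\ast_g a^{(2)})$.
   Context: $\mathcal{P}_{d,n}=(\bigwedge^d\mathbf{k}^{Md})^{\otimes n}$ ($\mathcal P_{d,0}=\mathbf k$), standard basis $v_1,\dots,v_{Md}$ of $\mathbf k^{Md}$. $\Sigma_n$ permutes tensor factors; $\mathcal P^\Sigma=\bigoplus_{d,n}\mathcal P^\Sigma_{d,n}$ with $\mathcal P^\Sigma_{d,n}$ the invariants. Shuffle: for a split $\sigma=(A,B)$ of $[n+m]$ (complementary $A=\{i_1<\dots<i_n\}$, $B=\{j_1<\dots<j_m\}$), $(u_1\otimes\cdots\otimes u_n)\cdot_\sigma(w_1\otimes\cdots\otimes w_m)=z_1\otimes\cdots\otimes z_{n+m}$, $z_{i_k}=u_k$, $z_{j_k}=w_k$; $f\cdot h=\sum_\sigma f\cdot_\sigma h$ over all such splits (same $d$ required, otherwise $0$). $\mathrm{Inc}(\mathbf N)$: strictly increasing maps $\mathbf N\to\mathbf N$; for $f\in\mathcal P_{d,n}$, $h\in\mathcal P_{e,n}$, $f\ast_g h=0$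 unless $g([Md])\subseteq[M(d+e)]$, and then with $g^c:[Me]\to[M(d+e)]$ the increasing bijection onto the complement of $g([Md])$, $(x_1\otimes\cdots\otimes x_n)\ast_g(y_1\otimes\cdots\otimes y_n)=\bigotimes_i(g(x_i)\wedge g^c(y_i))$ with $g(v_{s_1}\wedge\cdots\wedge v_{s_d})=v_{g(s_1)}\wedge\cdots\wedge v_{g(s_d)}$ (bilinear; $0$ when the numbers of tensor factors differ). Comultiplication $\Delta:\mathcal P^\Sigma\to\mathcal P^\Sigma\otimes_{\mathbf k}\mathcal P^\Sigma$: for $w_1,\dots,w_n\in\bigwedge^e\mathbf k^{Me}$ and $S=\{s_1<\dots<s_j\}\subseteq[n]$, put $s(w_S)=\sum_{\tau\in\Sigma_j}w_{s_{\tau(1)}}\otimes\cdots\otimes w_{s_{\tau(j)}}$; $\Delta$ is the linear map with $\Delta(s(w_{[n]}))=\sum_{S\subseteq[n]}s(w_S)\otimes s(w_{[n]\setminus S})$. For $f\otimes b\in\mathcal P^\Sigma\otimes\mathcal P^\Sigma$ and $a_1\otimes a_2$, $(f\otimes b)\ast_g(a_1\otimes a_2):=(f\ast_g a_1)\cdot(b\ast_g a_2)$, extended linearly (terms with mismatched bidegrees vanish). *)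

(* Defs.v *)
From HB Require Import structures.
From mathcomp Require Import all_boot all_order all_fingroup all_algebra.
Set Implicit Arguments. Unset Strict Implicit. Unset Printing Implicit Defensive.
Import GRing.Theory.
Local Open Scope ring_scope.

(* Conventions: [N] = {1,...,N}; the basis vector v_s (1 <= s <= N) of k^N is
   indexed by the ordinal s-1 : 'I_N.  A basis element
   v_{s_1} /\ ... /\ v_{s_d} (s_1 < ... < s_d) of  /\^d k^{Md} is indexed by the
   d-element subset {s_1-1,...,s_d-1} of 'I_(M*d). *)
Notation wb M d := {S : {set 'I_(M * d)} | #|S| == d}.

(* basis of P_{d,n} = (/\^d k^{Md})^{(x) n}: n-tuples of wedge-basis indices *)
Notation idx M d n := {ffun 'I_n -> wb M d}.

Notation P k M d n := {ffun idx M d n -> k%type}.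

Section Defs.
Variable k : fieldType.
Variable M : nat.

Definition basisT d n (t : idx M d n) : P k M d n := [ffun u => (u == t)%:R].

Definition sym_inv d n (f : P k M d n) : Prop :=
  forall (s : 'S_n) (t : idx M d n), f [ffun i => t (s i)] = f t.

Definition incr n N (a : {ffun 'I_n -> 'I_N}) : bool :=
  [forall i : 'I_n, forall j : 'I_n, (i < j)%N ==> (a i < a j)%N].

(* a split (A,B) of [n+m], |A| = n, |B| = m, is encoded by the increasing
   enumerations a of A and b of B (disjoint images, hence complementary) *)
Definition split_ok n m (a : {ffun 'I_n -> 'I_(n + m)}) (b : {ffun 'I_m -> 'I_(n + m)}) : bool :=
  [&& incr a, incr b & [forall i, forall j, a i != b j]].

Definition shuffle d n m (f : P k M d n) (h : P k M d m) : P k M d (n + m) :=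
  [ffun z : idx M d (n + m) =>
     \sum_(a : {ffun 'I_n -> 'I_(n + m)})
       \sum_(b : {ffun 'I_m -> 'I_(n + m)} | split_ok a b)
          f [ffun i => z (a i)] * h [ffun j => z (b j)]].

(* g^c : [Me] -> [M(d+e)], the increasing bijection onto the complement of
   g([Md]) (1-based) *)
Definition gc (g : nat -> nat) (d e j : nat) : nat :=
  nth 0%N [seq i <- iota 1 (M * (d + e)) | i \notin [seq g l | l <- iota 1 (M * d)]] j.-1.

Definition g_ok (g : nat -> nat) (d e : nat) : bool :=
  [forall i : 'I_(M * d), (g i.+1 <= M * (d + e))%N].

Definition wmatch (g : nat -> nat) d e (S : wb M d) (T : wb M e) (z : wb M (d + e)) : bool :=
  [forall t : 'I_(M * (d + e)),
     (t \in val z) ==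
     ([exists s in val S, g s.+1 == t.+1] || [exists u in val T, gc g d e u.+1 == t.+1])].

(* sign with  g(v_S) /\ g^c(v_T) = wsign * v_{g(S) \cup g^c(T)} *)
Definition wsign (g : nat -> nat) d e (S : wb M d) (T : wb M e) : k :=
  (-1) ^+ #|[set p : 'I_(M * d) * 'I_(M * e) |
              [&& p.1 \in val S, p.2 \in val T & (gc g d e p.2.+1 < g p.1.+1)%N]]|.

Definition gstar (g : nat -> nat) d e n (f : P k M d n) (h : P k M e n) : P k M (d + e) n :=
  if g_ok g d e then
    [ffun z : idx M (d + e) n =>
       \sum_(x : idx M d n) \sum_(y : idx M e n)
         (if [forall i, wmatch g (x i) (y i) (z i)]
          then f x * h y * \prod_(i < n) wsign g (x i) (y i) else 0)]
  else 0.

(* P_{e,n} (x)_k P_{e,m}, in the tensor basis *)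
Local Notation T2 e n m := {ffun (idx M e n * idx M e m)%type -> k}.

Definition tens e n m (a1 : P k M e n) (a2 : P k M e m) : T2 e n m :=
  [ffun p => a1 p.1 * a2 p.2].

(* (f (x) b) *_g X, the linear extension of (f(x)b) *_g (a1(x)a2) := (f *_g a1).(b *_g a2) *)
Definition star2 (g : nat -> nat) d e n m (f : P k M d n) (b : P k M d m) (X : T2 e n m)
  : P k M (d + e) (n + m) :=
  [ffun z => \sum_(p : idx M e n * idx M e m)
     X p * shuffle (gstar g f (basisT p.1)) (gstar g b (basisT p.2)) z].

Definition symt e j (u : idx M e j) : P k M e j :=
  \sum_(tau : 'S_j) basisT [ffun i => u (tau i)].

(* Delta(s(e_t)) component in P_{e,n} (x) P_{e,m} *)
Definition Delta_s e n m (t : idx M e (n + m)) : T2 e n m :=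
  \sum_(a : {ffun 'I_n -> 'I_(n + m)})
    \sum_(b : {ffun 'I_m -> 'I_(n + m)} | split_ok a b)
      tens (symt [ffun i => t (a i)]) (symt [ffun j => t (b j)]).

(* component of Delta(a) in P^Sigma_{e,n} (x) P^Sigma_{e,m}, for symmetric a,
   using a = (1/(n+m)!) \sum_t a(t) s(e_t) and linearity of Delta *)
Definition Delta_nm e n m (a : P k M e (n + m)) : T2 e n m :=
  [ffun p => \sum_(t : idx M e (n + m)) (a t / ((n + m)`!)%:R) * @Delta_s e n m t p].

End Defs.

(* Main.v *)
Require Import Defs.
From HB Require Import structures.
From mathcomp Require Import all_boot all_order all_fingroup all_algebra.
Set Implicit Arguments. Unset Strict Implicit. Unset Printing Implicit Defensive.
Import Order.TTheory GRing.Theory.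
From mathcomp Require Import ring.
Local Open Scope ring_scope.

Section Splits.
Variables n m : nat.
Local Notation N := (n + m)%N.

Lemma incrP p q (a : {ffun 'I_p -> 'I_q}) :
  incr a -> forall i j : 'I_p, (i < j)%N -> (a i < a j)%N.
Proof. by move=> /forallP H i j lij; move: (H i) => /forallP /(_ j) /implyP; apply. Qed.

Lemma incr_inj p q (a : {ffun 'I_p -> 'I_q}) : incr a -> injective a.
Proof.
move=> ia i j eij; apply/val_inj/eqP; apply/negPn/negP => nij.
move: nij; rewrite neq_ltn => /orP[] l.
  by move: (incrP ia l); rewrite eij ltnn.
by move: (incrP ia l); rewrite eij ltnn.
Qed.

Definition hsplit (a : 'I_n -> 'I_N) (b : 'I_m -> 'I_N) (u : 'I_n + 'I_m) : 'I_N :=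
  match u with inl i => a i | inr j => b j end.

Lemma hsplit_bij (a : 'I_n -> 'I_N) (b : 'I_m -> 'I_N) :
  injective a -> injective b -> (forall i j, a i != b j) -> bijective (hsplit a b).
Proof.
move=> ia ib dab; apply: inj_card_bij; last by rewrite card_sum !card_ord.
case=> [i|j] [i'|j'] //= E.
- by rewrite (ia _ _ E).
- by move: (dab i j'); rewrite E eqxx.
- by move: (dab i' j); rewrite E eqxx.
- by rewrite (ib _ _ E).
Qed.

Lemma split_bij (a : {ffun 'I_n -> 'I_N}) (b : {ffun 'I_m -> 'I_N}) :
  split_ok a b -> bijective (hsplit a b).
Proof.
case/and3P=> ia ib /forallP dab; apply: hsplit_bij; try exact: incr_inj.
by move=> i j; move/forallP: (dab i); apply.
Qed.

End Splits.

Section Splits2.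
Variables n m : nat.
Local Notation N := (n + m)%N.
Variables (a : {ffun 'I_n -> 'I_N}) (b : {ffun 'I_m -> 'I_N}).
Hypothesis ok : split_ok a b.

Definition rs (V : Type) p (c : {ffun 'I_p -> 'I_N}) (x : {ffun 'I_N -> V}) : {ffun 'I_p -> V} :=
  [ffun i => x (c i)].

Lemma sum_res (R : nmodType) (V : finType) (G : {ffun 'I_n -> V} -> {ffun 'I_m -> V} -> R) :
  \sum_(x : {ffun 'I_N -> V}) G (rs a x) (rs b x) = \sum_x1 \sum_x2 G x1 x2.
Proof.
case: (split_bij ok) => hinv hK Kh.
rewrite pair_bigA /=.
pose mg (q : {ffun 'I_n -> V} * {ffun 'I_m -> V}) : {ffun 'I_N -> V} :=
  [ffun i => match hinv i with inl j => q.1 j | inr j => q.2 j end].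
have bij : bijective (fun x : {ffun 'I_N -> V} => (rs a x, rs b x)).
  exists mg.
    move=> x; apply/ffunP => i; rewrite ffunE.
    have := Kh i; case: (hinv i) => [j|j] /= <-; by rewrite ffunE.
  case=> x1 x2; congr pair; apply/ffunP => i; rewrite !ffunE.
    by rewrite (hK (inl i)).
  by rewrite (hK (inr i)).
rewrite (reindex _ (onW_bij _ bij)) /=.
by apply: eq_bigr.
Qed.

Lemma prod_split (R : comNzRingType) (F : 'I_N -> R) :
  \prod_i F i = (\prod_i F (a i)) * \prod_j F (b j).
Proof.
case: (split_bij ok) => hinv hK Kh.
have bij : bijective (hsplit a b) by exists hinv.
by rewrite (reindex _ (onW_bij _ bij)) big_sumType.
Qed.

Lemma forall_split (F : 'I_N -> bool) :
  [forall i, F i] = [forall i, F (a i)] && [forall j, F (b j)].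
Proof.
case: (split_bij ok) => hinv hK Kh.
apply/forallP/andP.
  by move=> H; split; apply/forallP => i.
case=> /forallP Ha /forallP Hb i; rewrite -(Kh i).
by case: (hinv i).
Qed.

End Splits2.

Section Uniq.
Variables p q : nat.

Lemma incr_le (c : {ffun 'I_p -> 'I_q}) : incr c -> forall i j : 'I_p, (i <= j)%N -> (c i <= c j)%N.
Proof.
move=> ic i j; rewrite leq_eqVlt => /orP[/eqP/val_inj -> //|l].
exact/ltnW/(incrP ic).
Qed.

Lemma incr_step (c c' : {ffun 'I_p -> 'I_q}) (i : 'I_p) :
  incr c -> incr c' -> [set c x | x : 'I_p] = [set c' x | x : 'I_p] ->
  (forall j : 'I_p, (j < i)%N -> c j = c' j) -> ~~ (c i < c' i)%N.
Proof.
move=> ic ic' E H; apply/negP => lt.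
have : c i \in [set c' x | x : 'I_p] by rewrite -E; apply/imsetP; exists i.
case/imsetP=> j _ ej.
case: (ltnP j i) => lji.
  by move: (H j lji) => ecj; move: lji; rewrite -ecj in ej; rewrite (incr_inj ic ej) ltnn.
by move: (incr_le ic' lji); rewrite -ej leqNgt lt.
Qed.

Lemma incr_uniq (c c' : {ffun 'I_p -> 'I_q}) :
  incr c -> incr c' -> [set c x | x : 'I_p] = [set c' x | x : 'I_p] -> c = c'.
Proof.
move=> ic ic' E.
suff H : forall i0 (i : 'I_p), (i < i0)%N -> c i = c' i.
  by apply/ffunP => i; apply: (H i.+1).
elim=> [//|i0 IH] i; rewrite ltnS leq_eqVlt => /orP[/eqP ei|]; last exact: IH.
have H : forall j : 'I_p, (j < i)%N -> c j = c' j by move=> j; rewrite ei; apply: IH.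
have H' : forall j : 'I_p, (j < i)%N -> c' j = c j by move=> j /H ->.
apply/val_inj/eqP; rewrite eqn_leq; apply/andP; split; rewrite leqNgt.
  exact: (incr_step ic' ic (esym E) H').
exact: (incr_step ic ic' E H).
Qed.
End Uniq.

Lemma incr_exists q p (A : {set 'I_q}) (hA : #|A| = p) :
  exists c : {ffun 'I_p -> 'I_q}, incr c && ([set c x | x : 'I_p] == A).
Proof.
pose c : {ffun 'I_p -> 'I_q} := [ffun i => Order.enum_val (A := A) (cast_ord (esym hA) i)].
have ic : incr c.
  apply/forallP => i; apply/forallP => j; apply/implyP => lij.
  rewrite !ffunE.
  have le : (Order.enum_val (A := A) (cast_ord (esym hA) i) <= Order.enum_val (A := A) (cast_ord (esym hA) j))%O.
    rewrite Order.EnumVal.le_enum_val; last exact: le_total.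
    by rewrite leEord /= ltnW.
  rewrite leEord /= in le.
  rewrite ltn_neqAle le andbT; apply/negP => /eqP /val_inj /Order.EnumVal.enum_val_inj.
  by move=> /(congr1 val) /= eij; move: lij; rewrite eij ltnn.
exists c; rewrite ic /= eqEcard card_imset; last exact: incr_inj ic.
rewrite card_ord hA leqnn andbT.
by apply/subsetP => x /imsetP [i _ ->]; rewrite ffunE Order.EnumVal.enum_valP.
Qed.

Section Count.
Variables n m : nat.
Local Notation N := (n + m)%N.

Lemma split_compl (a : {ffun 'I_n -> 'I_N}) (b : {ffun 'I_m -> 'I_N}) :
  split_ok a b -> [set b x | x : 'I_m] = ~: [set a x | x : 'I_n].
Proof.
move=> ok; have := ok; case/and3P=> _ _ /forallP dab.
case: (split_bij ok) => hinv hK Kh.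
apply/setP => y; rewrite in_setC -(Kh y); case: (hinv y) => [i|j] /=.
  have -> : a i \in [set a x | x : 'I_n] by apply/imsetP; exists i.
  apply/negbTE/negP => /imsetP [j _ E].
  by move/forallP: (dab i) => /(_ j); rewrite E eqxx.
have -> : b j \in [set b x | x : 'I_m] by apply/imsetP; exists j.
symmetry; apply/negbT/negbTE/negP => /imsetP [i _ E].
by move/forallP: (dab i) => /(_ j); rewrite E eqxx.
Qed.

Lemma card_splits :
  #|[pred q : {ffun 'I_n -> 'I_N} * {ffun 'I_m -> 'I_N} | split_ok q.1 q.2]| = 'C(N, n).
Proof.
set D := [pred q : {ffun 'I_n -> 'I_N} * {ffun 'I_m -> 'I_N} | split_ok q.1 q.2].
pose img := fun q : {ffun 'I_n -> 'I_N} * {ffun 'I_m -> 'I_N} => [set q.1 x | x : 'I_n].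
have injD : {in D &, injective img}.
  case=> [x1 x2] [y1 y2]; rewrite !inE /= => okx oky; rewrite /img /= => E.
  have := okx; have := oky; case/and3P=> iy1 iy2 _; case/and3P=> ix1 ix2 _.
  have e1 : x1 = y1 by apply: incr_uniq.
  have e2 : x2 = y2 by apply: incr_uniq => //; rewrite (split_compl okx) (split_compl oky) E.
  by rewrite e1 e2.
rewrite -(card_in_imset injD).
have -> : [set img q | q in D] = [set A : {set 'I_N} | #|A| == n].
  apply/setP => A; rewrite inE; apply/imsetP/eqP.
    case=> q Dq ->; rewrite /img card_imset ?card_ord //.
    by move: Dq; rewrite inE => /and3P [/incr_inj].
  move=> hA.
  have hC : #|~: A| = m.
    by apply/eqP; rewrite -(eqn_add2l n) -{1}hA cardsC card_ord.
  case: (incr_exists hA) => c /andP [ic /eqP Ec].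
  case: (incr_exists hC) => c' /andP [ic' /eqP Ec'].
  exists (c, c'); last by rewrite /img Ec.
  rewrite inE /= /split_ok ic ic' /=.
  apply/forallP => i; apply/forallP => j; apply/negP => /eqP E.
  have : c i \in A by rewrite -Ec; apply/imsetP; exists i.
  have : c' j \in ~: A by rewrite -Ec'; apply/imsetP; exists j.
  by rewrite E inE => /negPf ->.
by rewrite card_draws card_ord.
Qed.

End Count.

Section Delta.
Variables (k : fieldType) (M e n m : nat).
Local Notation N := (n + m)%N.

Lemma Delta_inner (a : P k M e N) (a_sym : sym_inv a)
  (al : {ffun 'I_n -> 'I_N}) (be : {ffun 'I_m -> 'I_N}) (ok : split_ok al be)
  (al' : {ffun 'I_n -> 'I_N}) (be' : {ffun 'I_m -> 'I_N}) (ok' : split_ok al' be')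
  (tau : 'S_n) (sig : 'S_m) (y : idx M e N) (c : k) :
  \sum_(t : idx M e N) c * a t *
     ((rs al y == [ffun i => [ffun i => t (al' i)] (tau i)])%:R *
      (rs be y == [ffun i => [ffun i => t (be' i)] (sig i)])%:R) = c * a y.
Proof.
case: (split_bij ok) => hinv hK Kh.
have bij' : bijective (hsplit (fun i => al' (tau i)) (fun j => be' (sig j))).
  have := ok'; case/and3P => i1 i2 /forallP d12.
  apply: hsplit_bij.
  - by move=> x y' /(incr_inj i1) /perm_inj.
  - by move=> x y' /(incr_inj i2) /perm_inj.
  by move=> i j; move/forallP: (d12 (tau i)); apply.
case: bij' => hinv' hK' Kh'.
have injpi : injective (fun i => hsplit al be (hinv' i)).
  by move=> i j /(can_inj hK) /(can_inj Kh').
pose pi := perm injpi.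
pose t0 : idx M e N := [ffun i => y (pi i)].
have claim : forall t : idx M e N,
   (rs al y == [ffun i => [ffun i => t (al' i)] (tau i)]) &&
   (rs be y == [ffun i => [ffun i => t (be' i)] (sig i)]) = (t == t0).
  move=> t; apply/andP/eqP.
    case=> /eqP E1 /eqP E2; apply/ffunP => i; rewrite ffunE permE.
    rewrite -{1}(Kh' i); case: (hinv' i) => [i1|j1] /=.
      by move/ffunP: E1 => /(_ i1); rewrite !ffunE => ->.
    by move/ffunP: E2 => /(_ j1); rewrite !ffunE => ->.
  move=> ->; split; apply/eqP/ffunP => i; rewrite !ffunE permE /=.
    by have := hK' (inl i) => /= ->.
  by have := hK' (inr i) => /= ->.
have E : forall t : idx M e N, c * a t *
     ((rs al y == [ffun i => [ffun i => t (al' i)] (tau i)])%:R *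
      (rs be y == [ffun i => [ffun i => t (be' i)] (sig i)])%:R) =
     if t == t0 then c * a t else 0.
  move=> t; rewrite -claim.
  by case: (_ == _); case: (_ == _); rewrite /= ?mulr1 ?mulr0.
rewrite (eq_bigr _ (fun t _ => E t)) -big_mkcond big_pred1_eq.
by rewrite /t0 a_sym.
Qed.

End Delta.

Lemma Delta_eval (k : fieldType) (chark : [pchar k] =i pred0) (M e n m : nat)
  (a : P k M e (n + m)) (a_sym : sym_inv a)
  (al : {ffun 'I_n -> 'I_(n + m)}) (be : {ffun 'I_m -> 'I_(n + m)}) (ok : split_ok al be)
  (y : idx M e (n + m)) :
  Delta_nm a (rs al y, rs be y) = a y.
Proof.
set N := (n + m)%N.
set c := (N`!%:R : k)^-1.
rewrite ffunE /=.
have Ds : forall t : idx M e N, a t / N`!%:R * Delta_s k t (rs al y, rs be y) =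
  \sum_(al' : {ffun 'I_n -> 'I_N}) \sum_(be' : {ffun 'I_m -> 'I_N} | split_ok al' be')
  \sum_(tau : 'S_n) \sum_(sig : 'S_m) c * a t *
     ((rs al y == [ffun i => [ffun i => t (al' i)] (tau i)])%:R *
      (rs be y == [ffun i => [ffun i => t (be' i)] (sig i)])%:R).
  move=> t; rewrite /Delta_s sum_ffunE big_distrr; apply: eq_bigr => al' _.
  rewrite sum_ffunE big_distrr; apply: eq_bigr => be' _.
  rewrite ffunE /symt !sum_ffunE /= big_distrl big_distrr /=; apply: eq_bigr => tau _.
  rewrite big_distrr big_distrr /=; apply: eq_bigr => sig _.
  rewrite !ffunE /c; ring.
rewrite (eq_bigr _ (fun t _ => Ds t)).
rewrite exchange_big /=.
transitivity (\sum_(al' : {ffun 'I_n -> 'I_N}) \sum_(be' : {ffun 'I_m -> 'I_N} | split_ok al' be')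
  \sum_(tau : 'S_n) \sum_(sig : 'S_m) c * a y).
  apply: eq_bigr => al' _; rewrite exchange_big; apply: eq_bigr => be' ok'.
  rewrite exchange_big; apply: eq_bigr => tau _; rewrite exchange_big; apply: eq_bigr => sig _.
  exact: Delta_inner.
have cst : forall x : k, \sum_(tau : 'S_n) \sum_(sig : 'S_m) x = x *+ (n`! * m`!).
  move=> x; rewrite (eq_bigr (fun _ => x *+ m`!)); last by move=> *; rewrite sumr_const card_Sn.
  by rewrite sumr_const card_Sn -mulrnA mulnC.
under eq_bigr do under eq_bigr do rewrite cst.
rewrite pair_big_dep /=.
rewrite sumr_const.
rewrite (_ : #|_| = 'C(N, n)); last exact: card_splits.
have F : (n`! * m`! * 'C(N, n))%N = N`!.
  have le : (n <= N)%N by rewrite /N leq_addr.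
  by have := bin_fact le; rewrite /N addKn mulnC => <-.
have nz : (N`!%:R : k) != 0 by rewrite (proj1 (pcharf0P k) chark) -lt0n fact_gt0.
by rewrite -mulrnA F -mulr_natr /c mulrAC mulVf ?mul1r.
Qed.

Lemma gstar_basis (k : fieldType) (M : nat) (g : nat -> nat) (d e p : nat)
  (F : P k M d p) (q : idx M e p) (w : idx M (d + e) p) :
  g_ok M g d e ->
  gstar g F (basisT k q) w =
  \sum_(x : idx M d p) (if [forall i, wmatch g (x i) (q i) (w i)]
                        then F x * \prod_(i < p) wsign k g (x i) (q i) else 0).
Proof.
move=> G; rewrite /gstar G ffunE; apply: eq_bigr => x _.
rewrite (bigD1 q) //= [X in _ + X = _]big1 => [|y ne]; first by rewrite ffunE eqxx mulr1 addr0.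
by rewrite ffunE (negbTE ne) mulr0 mul0r; case: ifP.
Qed.

Section Main.
Variables (k : fieldType) (M d e n m : nat) (g : nat -> nat).
Local Notation N := (n + m)%N.
Variables (al : {ffun 'I_n -> 'I_N}) (be : {ffun 'I_m -> 'I_N}).
Hypothesis ok : split_ok al be.

Lemma C_split (x : idx M d N) (y : idx M e N) (w : idx M (d + e) N) :
  [forall i, wmatch g (x i) (y i) (w i)] =
  [forall i, wmatch g (rs al x i) (rs al y i) (rs al w i)] &&
  [forall i, wmatch g (rs be x i) (rs be y i) (rs be w i)].
Proof.
rewrite (forall_split ok (fun i => wmatch g (x i) (y i) (w i))).
by congr andb; apply: eq_forallb => i; rewrite !ffunE.
Qed.

Lemma W_split (x : idx M d N) (y : idx M e N) :
  \prod_(i < N) wsign k g (x i) (y i) =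
  (\prod_(i < n) wsign k g (rs al x i) (rs al y i)) *
  \prod_(i < m) wsign k g (rs be x i) (rs be y i).
Proof.
rewrite (prod_split ok (fun i => wsign k g (x i) (y i))).
by congr (_ * _); apply: eq_bigr => i _; rewrite !ffunE.
Qed.

End Main.

Lemma ffun0E (R : nmodType) (T : finType) (x : T) : (0 : {ffun T -> R}) x = 0.
Proof. by rewrite ffunE. Qed.


Lemma per_split (k : fieldType) (chark : [pchar k] =i pred0) (M d e n m : nat)
  (f : P k M d n) (b : P k M d m) (a : P k M e (n + m)) (g : nat -> nat)
  (a_sym : sym_inv a) (G : g_ok M g d e) (z : idx M (d + e) (n + m))
  (al : {ffun 'I_n -> 'I_(n + m)}) (be : {ffun 'I_m -> 'I_(n + m)}) (ok : split_ok al be) :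
  \sum_(x : idx M d (n + m)) \sum_(y : idx M e (n + m))
     (if [forall i, wmatch g (x i) (y i) (z i)]
      then f (rs al x) * b (rs be x) * a y * \prod_(i < n + m) wsign k g (x i) (y i)
      else 0) =
  \sum_(p : idx M e n * idx M e m)
     Delta_nm a p * (gstar g f (basisT k p.1) (rs al z) * gstar g b (basisT k p.2) (rs be z)).
Proof.
pose H (x1 : idx M d n) (x2 : idx M d m) (y1 : idx M e n) (y2 : idx M e m) :=
  if [forall i, wmatch g (x1 i) (y1 i) (rs al z i)] && [forall i, wmatch g (x2 i) (y2 i) (rs be z i)]
  then f x1 * b x2 * Delta_nm a (y1, y2) *
       ((\prod_(i < n) wsign k g (x1 i) (y1 i)) * \prod_(i < m) wsign k g (x2 i) (y2 i))
  else 0.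
rewrite exchange_big /=.
transitivity (\sum_(y : idx M e (n + m)) \sum_(x : idx M d (n + m))
                H (rs al x) (rs be x) (rs al y) (rs be y)).
  apply: eq_bigr => y _; apply: eq_bigr => x _.
  rewrite /H (C_split g ok) (W_split k g ok) -(Delta_eval chark a_sym ok y).
  by rewrite [rs al z]/rs [rs be z]/rs.
transitivity (\sum_(y : idx M e (n + m)) \sum_(x1 : idx M d n) \sum_(x2 : idx M d m)
                H x1 x2 (rs al y) (rs be y)).
  apply: eq_bigr => y _; exact: (sum_res ok (fun x1 x2 => H x1 x2 (rs al y) (rs be y))).
rewrite (sum_res ok (fun y1 y2 => \sum_(x1 : idx M d n) \sum_(x2 : idx M d m) H x1 x2 y1 y2)).
rewrite [RHS](eq_bigr (fun p => Delta_nm a (p.1, p.2) *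
    (gstar g f (basisT k p.1) (rs al z) * gstar g b (basisT k p.2) (rs be z)))); last by case.
rewrite -(pair_bigA _ (fun y1 y2 => Delta_nm a (y1, y2) *
    (gstar g f (basisT k y1) (rs al z) * gstar g b (basisT k y2) (rs be z)))) /=; apply: eq_bigr => y1 _; apply: eq_bigr => y2 _.
rewrite !gstar_basis // big_distrl big_distrr /=; apply: eq_bigr => x1 _.
rewrite big_distrr big_distrr /=; apply: eq_bigr => x2 _.
rewrite /H; case: [forall i, wmatch g (x1 i) (y1 i) (rs al z i)];
  case: [forall i, wmatch g (x2 i) (y2 i) (rs be z i)]; rewrite /= ?mulr0 ?mul0r //; ring.
Qed.

Theorem mainTheorem15 (k : fieldType) (chark : [pchar k] =i pred0) (M d e n m : nat)
  (f : P k M d n) (b : P k M d m) (a : P k M e (n + m)) (g : nat -> nat)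
  (g_inc : forall i j : nat, (i < j)%N -> (g i < g j)%N)
  (f_sym : sym_inv f) (b_sym : sym_inv b) (a_sym : sym_inv a) :
  gstar g (shuffle f b) a = star2 g f b (@Delta_nm k M e n m a).
Proof.
case G: (g_ok M g d e); last first.
  apply/ffunP => z; rewrite /star2 /gstar G !ffunE big1 // => p _.
  rewrite big1 ?mulr0 // => al _; rewrite big1 // => be _.
  by rewrite !ffun0E mul0r.
apply/ffunP => z; rewrite /star2 {1}/gstar G !ffunE.
transitivity (\sum_(al : {ffun 'I_n -> 'I_(n + m)}) \sum_(be : {ffun 'I_m -> 'I_(n + m)} | split_ok al be)
  \sum_(x : idx M d (n + m)) \sum_(y : idx M e (n + m))
     (if [forall i, wmatch g (x i) (y i) (z i)]
      then f (rs al x) * b (rs be x) * a y * \prod_(i < n + m) wsign k g (x i) (y i)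
      else 0)).
  transitivity (\sum_(x : idx M d (n + m)) \sum_(y : idx M e (n + m))
     \sum_(al : {ffun 'I_n -> 'I_(n + m)}) \sum_(be : {ffun 'I_m -> 'I_(n + m)} | split_ok al be)
     (if [forall i, wmatch g (x i) (y i) (z i)]
      then f (rs al x) * b (rs be x) * a y * \prod_(i < n + m) wsign k g (x i) (y i)
      else 0)).
    apply: eq_bigr => x _; apply: eq_bigr => y _.
    case: ifP => _; last by rewrite big1 // => al _; rewrite big1.
    rewrite ffunE big_distrl big_distrl; apply: eq_bigr => al _.
    by rewrite big_distrl big_distrl; apply: eq_bigr.
  under eq_bigr => x _ do rewrite exchange_big.
  under eq_bigr => x _ do under eq_bigr => al _ do rewrite exchange_big.
  rewrite exchange_big; apply: eq_bigr => al _; exact: exchange_big.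
rewrite [RHS](eq_bigr (fun p => \sum_(al : {ffun 'I_n -> 'I_(n + m)})
    \sum_(be : {ffun 'I_m -> 'I_(n + m)} | split_ok al be)
    Delta_nm a p * (gstar g f (basisT k p.1) (rs al z) * gstar g b (basisT k p.2) (rs be z)))); last first.
  move=> p _; rewrite [shuffle _ _ z]ffunE big_distrr; apply: eq_bigr => al _.
  by rewrite big_distrr.
rewrite [RHS]exchange_big /=; apply: eq_bigr => al _.
rewrite [RHS]exchange_big /=; apply: eq_bigr => be ok.
exact: per_split.
Qed.
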